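(* For any positive integer $T$, $x \in \{0,1\}^T$ and $p \in [0,1]^T$, $\mathsf{CalDist}(x,p) \le \mathsf{ECE}(x,p)$.
   Context: $\mathsf{ECE}(x,p) = \sum_{\alpha \in [0,1]} \left|\sum_{t=1}^T (x_t - p_t)\mathbf{1}[p_t = \alpha]\right|$ (only finitely many nonzero summands). For $x \in \{0,1\}^T$, let $\mathcal{C}(x) = \{q \in [0,1]^T : \sum_{t=1}^T (x_t - q_t)\mathbf{1}[q_t = \alpha] = 0 \text{ for all } \alpha \in [0,1]\}$ and $\mathsf{CalDist}(x,p) = \min_{q \in \mathcal{C}(x)} \|p-q\|_1$. *)

(* Defs.v *)
From HB Require Import structures.
From mathcomp Require Import all_boot all_order all_algebra.
From mathcomp Require Import boolp classical_sets reals.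
Set Implicit Arguments. Unset Strict Implicit. Unset Printing Implicit Defensive.
Import Order.TTheory GRing.Theory Num.Theory.
Local Open Scope ring_scope.
Local Open Scope classical_set_scope.

Definition binary (R : realType) (T : nat) (x : 'I_T -> R) : Prop :=
  forall t, x t = 0 \/ x t = 1.

Definition unit_vec (R : realType) (T : nat) (p : 'I_T -> R) : Prop :=
  forall t, 0 <= p t <= 1.

Definition bias_at (R : realType) (T : nat) (x p : 'I_T -> R) (a : R) : R :=
  \sum_(t < T | p t == a) (x t - p t).

(* ECE(x,p) = sum over alpha in [0,1] of |bias_at alpha|; only the finitely
   many values alpha taken by p can give a nonzero summand, so we sum over the
   distinct values of p. *)
Definition ECE (R : realType) (T : nat) (x p : 'I_T -> R) : R :=
  \sum_(a <- undup [seq p t | t <- enum 'I_T]) `|bias_at x p a|.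

Definition calibrated (R : realType) (T : nat) (x q : 'I_T -> R) : Prop :=
  unit_vec q /\ forall a : R, 0 <= a <= 1 -> bias_at x q a = 0.

Definition l1dist (R : realType) (T : nat) (p q : 'I_T -> R) : R :=
  \sum_(t < T) `|p t - q t|.

(* CalDist(x,p) = min_{q in C(x)} ||p - q||_1, formalized as the infimum of the
   set of attained distances (the paper asserts the min is attained). *)
Definition CalDist (R : realType) (T : nat) (x p : 'I_T -> R) : R :=
  inf [set d : R | exists q, calibrated x q /\ d = l1dist p q].

(* Main.v *)
Require Import Defs.
From HB Require Import structures.
From mathcomp Require Import all_boot all_order all_algebra.
From mathcomp Require Import boolp classical_sets reals.
Import Order.TTheory GRing.Theory Num.Theory.
Local Open Scope ring_scope.
Set Implicit Arguments. Unset Strict Implicit.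

Section Aux.
Variables (R : realType) (T : nat) (x p : 'I_T -> R).

Let U := undup [seq p t | t <- enum 'I_T].

Lemma U_uniq : uniq U. Proof. exact: undup_uniq. Qed.

Lemma memU t : p t \in U.
Proof. by rewrite mem_undup; apply: map_f; rewrite mem_enum. Qed.

Lemma sum_pred1U (F : R -> R) b : b \in U ->
  \sum_(a <- U | a == b) F a = F b.
Proof.
move=> hb; rewrite -big_filter.
have -> : [seq a <- U | a == b] = [:: b].
  by rewrite -(filter_pred1_uniq U_uniq hb).
by rewrite big_seq1.
Qed.

Lemma partU (f : 'I_T -> R) (P : pred R) :
  \sum_(t | P (p t)) f t = \sum_(a <- U | P a) \sum_(t | p t == a) f t.
Proof.
rewrite (exchange_big_dep (fun t => P (p t))); last by move=> a t Pa /eqP ->.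
apply: eq_bigr => t Pt.
rewrite (eq_bigl (fun a => a == p t)); first by rewrite sum_pred1U // memU.
move=> a /=; case: (eqVneq a (p t)) => [->|ne]; first by rewrite ?Pt ?eqxx ?andbT.
by rewrite andbF.
Qed.

Definition Nc (a : R) : R := \sum_(s | p s == a) 1.
Definition Sx (a : R) : R := \sum_(s | p s == a) x s.
Definition Qv (a : R) : R := Sx a / Nc a.

Lemma Nc_gt0 t : 0 < Nc (p t).
Proof.
rewrite /Nc (bigD1 t) //= ltr_wpDr //; first by apply: sumr_ge0.
Qed.

Lemma sum_const_cls (b c : R) : \sum_(t | p t == b) c = Nc b * c.
Proof. by rewrite /Nc mulr_suml; apply: eq_bigr => t _; rewrite mul1r. Qed.

End Aux.

Theorem proposition3 (R : realType) (T : nat) (hT : (0 < T)%N)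
  (x p : 'I_T -> R) (hx : binary x) (hp : unit_vec p) :
  CalDist x p <= ECE x p.
Proof.
pose q t := Qv x p (p t).
have cls0 : forall b, b \in undup [seq p t | t <- enum 'I_T] ->
    \sum_(t | p t == b) (x t - Qv x p b) = 0.
  move=> b; rewrite mem_undup => /mapP [t0 _ ->].
  rewrite big_split /= sumrN sum_const_cls /Qv -/(Sx x p (p t0)).
  by rewrite mulrC divfK ?subrr // gt_eqF // Nc_gt0.
have qcal : calibrated x q.
  split.
    move=> t; rewrite /q /Qv; have hN := Nc_gt0 p t.
    have hS0 : 0 <= Sx x p (p t).
      by apply: sumr_ge0 => s _; case: (hx s) => ->.
    have hS1 : Sx x p (p t) <= Nc p (p t).
      by apply: ler_sum => s _; case: (hx s) => ->.
    by rewrite divr_ge0 ?(ltW hN) //= ler_pdivrMr // mul1r.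
  move=> a _; rewrite /bias_at /q.
  rewrite (partU p (fun t => x t - Qv x p (p t)) (fun b => Qv x p b == a)).
  rewrite big_seq_cond big1 // => b /andP [hb _].
  rewrite -[RHS](cls0 b hb); apply: eq_bigr => t /eqP -> //.
have hl : l1dist p q = ECE x p.
  rewrite /l1dist /ECE.
  have := partU p (fun t => `|p t - q t|) xpredT; rewrite /= => ->.
  rewrite !big_seq; apply: eq_bigr => b hb.
  rewrite /bias_at.
  transitivity (Nc p b * `|b - Qv x p b|).
    by rewrite /Nc mulr_suml; apply: eq_bigr => t /eqP <-; rewrite mul1r.
  move: hb; rewrite mem_undup => /mapP [t0 _ ->].
  have hN := Nc_gt0 p t0.
  have -> : \sum_(t < T | p t == p t0) (x t - p t) = Sx x p (p t0) - Nc p (p t0) * p t0.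
    rewrite -sum_const_cls -sumrB; apply: eq_bigr => t /eqP -> //.
  have -> : Sx x p (p t0) = Nc p (p t0) * Qv x p (p t0).
    by rewrite /Qv mulrC divfK // gt_eqF.
  by rewrite -mulrBr normrM gtr0_norm // -normrN opprB.
rewrite -hl.
have := @ge_inf R [set d : R | exists q, calibrated x q /\ d = l1dist p q].
apply.
  exists 0 => d [q' [_ ->]]; apply: sumr_ge0 => t _; exact: normr_ge0.
by exists q.
Qed.
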